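(* Let $R=k\{x_1,\ldots,x_n;\,Q,\preceq\}$ be a PBW algebra and use TOP on both $R^s$ (built from $\preceq$) and $(R^{\rm env})^s$ (built from the chosen order on $\mathbb{N}^{2n}$), or POT on both. (a) If the order on $R^{\rm env}$ is $\preceq^*$ or $\preceq^c$ and $\mathbf h\in(R^{\rm env})^s$ satisfies $\exp(\mathbf h)=((\alpha,0),i)\in\mathbb{N}^{2n,(s)}$, then $\mathbf h\notin\mathrm{Ker}(\mathfrak m^s)$ and $\exp(\mathfrak m^s(\mathbf h))=(\alpha,i)$. (b) If the order on $R^{\rm env}$ is $\preceq_*$ or $\preceq_c$ and $\exp(\mathbf h)=((0,\alpha),i)$, then $\mathbf h\notin\mathrm{Ker}(\mathfrak m^s)$ and $\exp(\mathfrak m^s(\mathbf h))=(\alpha^{\rm op},i)$.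
   Context: $k$ is a field; $x^\alpha=x_1^{\alpha_1}\cdots x_n^{\alpha_n}$. A PBW algebra $R=k\{x_1,\ldots,x_n;Q,\preceq\}$ is a quotient of $k\langle x_1,\ldots,x_n\rangle$ by the two-sided ideal generated by $Q=\{x_jx_i-q_{ji}x_ix_j-p_{ji};\,i<j\}$, $q_{ji}\in k^*$, each $p_{ji}$ a combination of standard monomials with exponents $\prec\epsilon_i+\epsilon_j$ for an admissible order $\preceq$ (total, compatible with addition, $0$ minimal), such that the standard monomials form a $k$-basis. $R^{\rm env}=R\otimes_kR^{\rm op}$ is regarded as the PBW algebra in the variables $x_1\otimes1,\ldots,x_n\otimes1,1\otimes x_n,\ldots,1\otimes x_1$ (in this order); the exponent $(\alpha,\beta)\in\mathbb N^{2n}$ corresponds to the monomial $x^\alpha\otimes x^{\beta^{\rm op}}$, where $\beta^{\rm op}=(\beta_n,\ldots,\beta_1)$. Let $\alpha\preceq^{\rm op}\beta$ iff $\alpha^{\rm op}\preceq\beta^{\rm op}$. Orders on $\mathbb N^{2n}$: $(\alpha,\beta)\prec^*(\gamma,\delta)$ iff $\beta\prec^{\rm op}\delta$, or $\beta=\delta$ and $\alpha\prec\gamma$; $(\alpha,\beta)\prec_*(\gamma,\delta)$ iff $\alpha\prec\gamma$, or $\alpha=\gamma$ and $\beta\prec^{\rm op}\delta$; $(\alpha,\beta)\prec^c(\gamma,\delta)$ iff $\alpha+\beta^{\rm op}\prec\gamma+\delta^{\rm op}$, or equality and $\beta^{\rm op}\prec\delta^{\rm op}$; $(\alpha,\beta)\prec_c(\gamma,\delta)$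 iff $\alpha+\beta^{\rm op}\prec\gamma+\delta^{\rm op}$, or equality and $\alpha\prec\gamma$. For an admissible order $\le$ on $\mathbb N^m$, $\mathbb N^{m,(s)}=\mathbb N^m\times\{1,\ldots,s\}$ carries TOP: $(\alpha,i)<(\beta,j)$ iff $\alpha<\beta$, or $\alpha=\beta$ and $i>j$; and POT: $(\alpha,i)<(\beta,j)$ iff $i>j$, or $i=j$ and $\alpha<\beta$. A nonzero element of $A^s$ ($A=R$ or $R^{\rm env}$, basis $\mathbf e_i$) is uniquely $\sum c_{(\alpha,i)}x^\alpha\mathbf e_i$, and $\exp$ is the largest $(\alpha,i)$ with $c_{(\alpha,i)}\ne0$. $\mathfrak m^s:(R^{\rm env})^s\to R^s$ applies $\mathfrak m(r\otimes r')=rr'$ coordinatewise. *)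

(* Defs.v *)
From HB Require Import structures.
From mathcomp Require Import all_boot all_order all_algebra.
From mathcomp Require Import finmap.
Set Implicit Arguments. Unset Strict Implicit. Unset Printing Implicit Defensive.
Import Order.TTheory GRing.Theory.
Local Open Scope ring_scope.

Definition expo (n : nat) := {ffun 'I_n -> nat}.
Definition eadd n (a b : expo n) : expo n := [ffun i => (a i + b i)%N].
Definition ezero n : expo n := [ffun => 0%N].
Definition eps n (i : 'I_n) : expo n := [ffun j => nat_of_bool (i == j)].
Definition eop n (a : expo n) : expo n := [ffun i => a (rev_ord i)].

Definition admissible n (le : rel (expo n)) : Prop :=
  [/\ reflexive le, antisymmetric le, transitive le & total le] /\
  (forall a b c, le a b -> le (eadd a c) (eadd b c)) /\
  (forall a, le (ezero n) a).

Definition strict (T : eqType) (le : rel T) : rel T := fun a b => (a != b) && le a b.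

Definition mono (k : fieldType) (R : algType k) n (x : 'I_n -> R) (a : expo n) : R :=
  \prod_(i < n) x i ^+ a i.

Definition rcoord (k : fieldType) (R : algType k) n (x : 'I_n -> R) (r : R)
    (c : {fsfun expo n -> k with 0}) : Prop :=
  r = \sum_(a <- finsupp c) c a *: mono x a.

Definition PBW (k : fieldType) (R : algType k) n (x : 'I_n -> R)
    (le : rel (expo n)) (q : 'I_n -> 'I_n -> k)
    (p : 'I_n -> 'I_n -> {fsfun expo n -> k with 0}) : Prop :=
  admissible le /\
  [/\ (forall i j : 'I_n, (i < j)%N -> q j i != 0),
      (forall i j : 'I_n, (i < j)%N -> forall a, a \in finsupp (p j i) ->
          strict le a (eadd (eps i) (eps j))),
      (forall i j : 'I_n, (i < j)%N ->
          x j * x i = q j i *: (x i * x j) + \sum_(a <- finsupp (p j i)) p j i a *: mono x a),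
      (forall r : R, exists c, rcoord x r c)
    & (forall c : {fsfun expo n -> k with 0},
          \sum_(a <- finsupp c) c a *: mono x a = 0 -> forall a, c a = 0)].

Definition ltop n (lt : rel (expo n)) : rel (expo n) := fun a b => lt (eop a) (eop b).
Definition env_star n (lt : rel (expo n)) : rel (expo n * expo n) := fun x y =>
  ltop lt x.2 y.2 || ((x.2 == y.2) && lt x.1 y.1).
Definition env_lstar n (lt : rel (expo n)) : rel (expo n * expo n) := fun x y =>
  lt x.1 y.1 || ((x.1 == y.1) && ltop lt x.2 y.2).
Definition env_c n (lt : rel (expo n)) : rel (expo n * expo n) := fun x y =>
  lt (eadd x.1 (eop x.2)) (eadd y.1 (eop y.2)) ||
  ((eadd x.1 (eop x.2) == eadd y.1 (eop y.2)) && lt (eop x.2) (eop y.2)).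
Definition env_lc n (lt : rel (expo n)) : rel (expo n * expo n) := fun x y =>
  lt (eadd x.1 (eop x.2)) (eadd y.1 (eop y.2)) ||
  ((eadd x.1 (eop x.2) == eadd y.1 (eop y.2)) && lt x.1 y.1).

Definition TOP (T : eqType) s (lt : rel T) : rel (T * 'I_s) := fun x y =>
  lt x.1 y.1 || ((x.1 == y.1) && (y.2 < x.2)%N).
Definition POT (T : eqType) s (lt : rel T) : rel (T * 'I_s) := fun x y =>
  (y.2 < x.2)%N || ((x.2 == y.2) && lt x.1 y.1).
Definition modord (top : bool) (T : eqType) s (lt : rel T) : rel (T * 'I_s) :=
  if top then TOP lt else POT lt.

Definition Rexp (k : fieldType) (R : algType k) n s (x : 'I_n -> R)
    (ltm : rel (expo n * 'I_s)) (v : 'I_s -> R) (e : expo n * 'I_s) : Prop :=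
  exists c : 'I_s -> {fsfun expo n -> k with 0},
    [/\ forall i, rcoord x (v i) (c i),
        c e.2 e.1 != 0
      & forall e', c e'.2 e'.1 != 0 -> e' = e \/ ltm e' e].

(* Elements of (R^env)^s, given by their (finitely supported) coordinates in the
   basis (x^alpha (x) x^{beta^op}) e_i, indexed by ((alpha,beta), i). *)
Definition envvec (k : fieldType) n s := {fsfun (expo n * expo n * 'I_s) -> k with 0}.

Definition Eexp (k : fieldType) n s (ltm : rel (expo n * expo n * 'I_s))
    (h : envvec k n s) (e : expo n * expo n * 'I_s) : Prop :=
  h e != 0 /\ forall e', h e' != 0 -> e' = e \/ ltm e' e.

(* m^s : (R^env)^s -> R^s, m(r (x) r') = r r', so
   m(x^alpha (x) x^{beta^op}) = x^alpha x^{beta^op}. *)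
Definition ms (k : fieldType) (R : algType k) n s (x : 'I_n -> R)
    (h : envvec k n s) : 'I_s -> R := fun i =>
  \sum_(t <- finsupp h | t.2 == i) h t *: (mono x t.1.1 * mono x (eop t.1.2)).

(* Main.v *)
Require Import Defs.
From HB Require Import structures.
From mathcomp Require Import all_boot all_order all_algebra.
From mathcomp Require Import finmap zify.
From Stdlib Require Import Classical ClassicalEpsilon.
Import GRing.Theory.
Local Open Scope ring_scope.

Lemma min_ex (P : nat -> Prop) : (exists v, P v) ->
  exists v, P v /\ forall w, P w -> (v <= w)%N.
Proof.
case=> v Pv; elim: v {-2}v (leqnn v) Pv => [|m IH] v Hv Pv.
  exists v; split => // w _; rewrite leqn0 in Hv; by rewrite (eqP Hv).
case: (classic (exists w, P w /\ (w < v)%N)) => [[w [Pw lt]]|nex].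
  apply: (IH w) => //; rewrite -ltnS; exact: leq_trans lt Hv.
exists v; split=> // w Pw; rewrite leqNgt; apply/negP => lt; apply: nex; by exists w.
Qed.

Lemma subseq_mono (g : nat -> nat) : exists phi : nat -> nat,
  (forall m, (phi m < phi m.+1)%N) /\ (forall m, (g (phi m) <= g (phi m.+1))%N).
Proof.
have H j : exists i, (j < i)%N /\ forall i', (j < i')%N -> (g i <= g i')%N.
  have [v [[i [ji gi]] mn]] := (@min_ex (fun v => exists i, (j < i)%N /\ g i = v)
     (ex_intro _ (g j.+1) (ex_intro _ j.+1 (conj (ltnSn j) erefl)))).
  exists i; split => // i' ji'; rewrite gi; apply: mn; by exists i'.
pose nxt j := proj1_sig (constructive_indefinite_description _ (H j)).
have Hn j : (j < nxt j)%N /\ forall i', (j < i')%N -> (g (nxt j) <= g i')%N.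
  rewrite /nxt; by case: constructive_indefinite_description.
exists (fun m => iter m.+1 nxt 0%N); split => m.
  by case: (Hn (iter m.+1 nxt 0%N)).
rewrite [iter m.+2 _ _]/= [iter m.+1 _ _]/=.
set j := iter m nxt 0%N.
apply: (Hn j).2; apply: ltn_trans (Hn j).1 (Hn (nxt j)).1.
Qed.

Lemma dickson n (f : nat -> expo n) :
  exists i j, (i < j)%N /\ forall l, (f i l <= f j l)%N.
Proof.
have Q : forall m, exists phi : nat -> nat, (forall a, (phi a < phi a.+1)%N) /\
    forall l : 'I_n, (l < m)%N -> forall a, (f (phi a) l <= f (phi a.+1) l)%N.
  elim=> [|m [phi [inc ch]]]; first by exists id.
  case: (ltnP m n) => [mn|nm]; last first.
    exists phi; split => // l lm1 a; apply: ch; exact: leq_trans (ltn_ord l) nm.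
  pose lm := Ordinal mn.
  have [psi [pinc pch]] := subseq_mono (fun a => f (phi a) lm).
  have phimono : {homo phi : a b / (a < b)%N >-> (a < b)%N}.
    apply: homo_ltn => //; exact: ltn_trans.
  exists (phi \o psi); split => [a|l lm1 a]; first exact: phimono.
  rewrite ltnS leq_eqVlt in lm1; case/orP: lm1 => [/eqP le|lt].
    have -> : l = lm by apply: val_inj. exact: pch.
  have hm : {homo (fun b => f (phi b) l) : a b / (a <= b)%N >-> (a <= b)%N}.
    apply: homo_leq => //; [exact: leq_trans | exact: ch].
  apply: hm; exact: ltnW (pinc a).
have [phi [inc ch]] := Q n.
exists (phi 0%N), (phi 1%N); split; first exact: inc.
move=> l; exact: ch l (ltn_ord l) 0%N.
Qed.

Section WF.
Context {n : nat} {le : rel (expo n)} (Hadm : admissible le).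

Lemma le_refl a : le a a. Proof. by case: Hadm => [[]]. Qed.
Lemma le_trans {a b c} : le a b -> le b c -> le a c.
Proof. case: Hadm => [[_ _ t _]] _ H1 H2; exact: t H1 H2. Qed.
Lemma le_anti {a b} : le a b -> le b a -> a = b.
Proof. case: Hadm => [[_ an _ _]] _ H1 H2; apply: an; by rewrite H1 H2. Qed.
Lemma le_total a b : le a b || le b a.
Proof. by case: Hadm => [[_ _ _ t]]. Qed.
Lemma le_add {a b} c : le a b -> le (eadd a c) (eadd b c).
Proof. by case: Hadm => _ [H _]; apply: H. Qed.
Lemma le0 a : le (ezero n) a.
Proof. by case: Hadm => _ [_ H]. Qed.

Lemma strict_le {a b} : strict le a b -> le a b.
Proof. by case/andP. Qed.
Lemma strict_trans_le {a b c} : le a b -> strict le b c -> strict le a c.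
Proof.
move=> ab /andP[bc lbc]; apply/andP; split; last exact: le_trans ab lbc.
apply/eqP => ac; move: bc; rewrite -ac => /eqP; apply.
by apply: le_anti => //; rewrite ac.
Qed.
Lemma strict_irr a : ~~ strict le a a. Proof. by rewrite /strict eqxx. Qed.
Lemma strict0 a : ~~ strict le a (ezero n).
Proof.
apply/negP => /andP[ne l]; move/eqP: ne; apply; apply: le_anti => //; exact: le0.
Qed.

Lemma cw_le (a b : expo n) : (forall l, (a l <= b l)%N) -> le a b.
Proof.
move=> H; pose d : expo n := [ffun l => (b l - a l)%N].
have := le_add a (le0 d).
have -> : eadd (ezero n) a = a by apply/ffunP => l; rewrite !ffunE.
suff -> : eadd d a = b by [].
by apply/ffunP => l; rewrite !ffunE subnK.
Qed.

Lemma adm_wf : well_founded (fun a b => strict le a b).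
Proof.
move=> a0; apply: NNPP => nacc.
have step_ex a : ~ Acc (fun a b => strict le a b) a ->
   exists b, strict le b a /\ ~ Acc (fun a b => strict le a b) b.
  move=> na; apply: NNPP => nex; apply: na; constructor => b ba.
  apply: NNPP => nb; apply: nex; by exists b.
pose step a := epsilon (inhabits a)
   (fun b => strict le b a /\ ~ Acc (fun a b => strict le a b) b).
have Hstep a : ~ Acc (fun a b => strict le a b) a ->
   strict le (step a) a /\ ~ Acc (fun a b => strict le a b) (step a).
  move=> na; exact: (epsilon_spec (inhabits a) _ (step_ex a na)).
pose f m := iter m step a0.
have nf m : ~ Acc (fun a b => strict le a b) (f m).
  elim: m => [|m IH] //=; exact: (Hstep _ IH).2.
have desc m : strict le (f m.+1) (f m) by exact: (Hstep _ (nf m)).1.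
have chain i j : (i < j)%N -> strict le (f j) (f i).
  elim: j => [|j IH] //; rewrite ltnS leq_eqVlt => /orP[/eqP->|lt] //.
  apply: strict_trans_le (strict_le (desc j)) (IH lt).
have [i [j [ij cw]]] := @dickson n f.
have := chain _ _ ij => /andP[ne lji].
by move/eqP: ne; apply; apply: le_anti => //; apply: cw_le.
Qed.
End WF.

Lemma prod_shift (A : pzRingType) m (f g : 'I_m -> A) (y : A) (i0 : nat) : (i0 < m)%N ->
  (forall i : 'I_m, (i < i0)%N -> f i = 1) -> (forall i : 'I_m, val i != i0 -> g i = f i) ->
  (forall i : 'I_m, val i = i0 -> g i = y * f i) -> \prod_(i < m) g i = y * \prod_(i < m) f i.
Proof.
elim: m f g i0 => [|m IH] f g i0 //.
move=> Hi0 Hf Hg Hy; rewrite !big_ord_recl.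
case: i0 Hi0 Hf Hg Hy => [|i0] Hi0 Hf Hg Hy.
  rewrite Hy // mulrA; congr (_ * _); apply: eq_bigr => i _; exact: Hg.
rewrite (Hg ord0) // (Hf ord0) // !mul1r.
apply: (IH (fun i => f (lift ord0 i)) (fun i => g (lift ord0 i)) i0) => // [i ii|i ii|i ii]; first exact: Hf.
  by apply: Hg; rewrite /= eqSS.
by apply: Hy; rewrite /= ii.
Qed.

Section Alg.
Variables (k : fieldType) (R : algType k) (n : nat) (x : 'I_n -> R) (le : rel (expo n))
  (q : 'I_n -> 'I_n -> k) (p : 'I_n -> 'I_n -> {fsfun expo n -> k with 0}).
Hypothesis HPBW : PBW x le q p.

Let Hadm : admissible le. Proof. by case: HPBW. Qed.

Definition lcomb (s : seq (k * expo n)) : R := \sum_(z <- s) z.1 *: mono x z.2.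
Definition G (P : expo n -> Prop) (r : R) :=
  exists s, r = lcomb s /\ forall z, z \in s -> P z.2.

Lemma G0 P : G P 0. Proof. exists [::]; by rewrite /lcomb big_nil. Qed.
Lemma GD P r1 r2 : G P r1 -> G P r2 -> G P (r1 + r2).
Proof.
move=> [s1 [-> H1]] [s2 [-> H2]]; exists (s1 ++ s2); split; first by rewrite /lcomb big_cat.
move=> z; rewrite mem_cat => /orP[]; [exact: H1|exact: H2].
Qed.
Lemma GZ P a r : G P r -> G P (a *: r).
Proof.
move=> [s [-> H]]; exists [seq (a * z.1, z.2) | z <- s]; split.
  rewrite /lcomb big_map scaler_sumr; apply: eq_bigr => z _ /=; by rewrite scalerA.
move=> z /mapP[z' z's ->] /=; exact: H.
Qed.
Lemma Gmono (P P' : expo n -> Prop) r : (forall c, P c -> P' c) -> G P r -> G P' r.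
Proof. move=> H [s [-> Hs]]; exists s; split => // z zs; apply: H; exact: Hs. Qed.
Lemma Gmon (P : expo n -> Prop) c : P c -> G P (mono x c).
Proof.
move=> Pc; exists [:: (1, c)]; split; first by rewrite /lcomb big_seq1 scale1r.
by move=> z; rewrite inE => /eqP->.
Qed.
Lemma Gsum P (I : Type) (r : seq I) (Q : pred I) (F : I -> R) :
  (forall i, Q i -> G P (F i)) -> G P (\sum_(i <- r | Q i) F i).
Proof. move=> H; apply: (big_ind (G P)) => //; [exact: G0 | exact: GD]. Qed.

Definition wp (w : seq 'I_n) : R := \prod_(i <- w) x i.
Definition cnt (w : seq 'I_n) : expo n := [ffun l => count_mem l w].
Fixpoint inv (w : seq 'I_n) : nat :=
  if w is h :: t then (count (fun y : 'I_n => (y < h)%N) t + inv t)%N else 0%N.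

Lemma inv_swap u v (i j : 'I_n) : (i < j)%N ->
  inv (u ++ j :: i :: v) = (inv (u ++ i :: j :: v)).+1.
Proof.
move=> ij; elim: u => [|h u IH] /=.
  rewrite ij ltnNge (ltnW ij) /=; lia.
rewrite IH !count_cat /=; lia.
Qed.

Lemma mono_cons (a : expo n) (h : 'I_n) : (forall l : 'I_n, (l < h)%N -> a l = 0%N) ->
  mono x (eadd (eps h) a) = x h * mono x a.
Proof.
move=> Ha; rewrite /mono; apply: (@prod_shift _ _ _ _ _ h) => // [i ih|i ih|i ih].
- by rewrite Ha.
- rewrite !ffunE; suff -> : (h == i) = false by [].
  by apply/negbTE; apply: contra ih => /eqP ->.
- have -> : i = h by apply/val_inj.
  by rewrite !ffunE eqxx /= add1n exprS.
Qed.

Lemma inv0_wp w : inv w = 0%N -> wp w = mono x (cnt w).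
Proof.
elim: w => [|h t IH] /=.
  move=> _; rewrite /wp big_nil /mono; symmetry; apply: big1 => i _.
  by rewrite ffunE /= expr0.
move/eqP; rewrite addn_eq0 => /andP[/eqP c0 /eqP i0].
rewrite /wp big_cons -/(wp t) IH //.
have -> : cnt (h :: t) = eadd (eps h) (cnt t) by apply/ffunP => l; rewrite !ffunE.
symmetry; apply: mono_cons => l lh; rewrite ffunE; apply/count_memPn; apply/negP => lt.
have : has (fun y : 'I_n => (y < h)%N) t by apply/hasP; exists l.
by rewrite has_count c0.
Qed.

Lemma inv_pos_split w : (0 < inv w)%N ->
  exists u v (i j : 'I_n), (i < j)%N /\ w = u ++ j :: i :: v.
Proof.
elim: w => [|h t IH] //=.
case: (posnP (inv t)) => [it0|itp] cpos; last first.
  have [u [v [i [j [ij ->]]]]] := IH itp; by exists (h :: u), v, i, j.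
rewrite it0 addn0 in cpos.
case: t IH it0 cpos => [|y t'] //= _ it0 cpos.
case: (ltnP y h) => yh; first by exists [::], t', y, h.
exfalso; move: it0 => /eqP; rewrite addn_eq0 => /andP[/eqP cy _].
have yh' : (y < h)%N = false by rewrite ltnNge yh.
move: cpos; rewrite /= yh' add0n -has_count => cpos.
case/hasP: cpos => z zt zh.
have : has (fun z : 'I_n => (z < y)%N) t' by apply/hasP; exists z => //; exact: leq_trans zh yh.
by rewrite has_count cy.
Qed.

Definition word (a : expo n) : seq 'I_n :=
  flatten [seq nseq (a i) i | i <- index_enum 'I_n].

Lemma wp_word a : wp (word a) = mono x a.
Proof.
rewrite /wp /word big_flatten big_map /mono; apply: eq_bigr => i _.
rewrite big_nseq; elim: (a i) => [|m IH] /=; by rewrite ?expr0 ?exprS ?IH.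
Qed.

Lemma count_word a l : count_mem l (word a) = a l.
Proof.
rewrite /word count_flatten -map_comp sumnE big_map.
rewrite (bigD1 l) //= big1 => [|i il]; rewrite count_nseq /=.
  by rewrite eqxx mul1n addn0.
by rewrite (negbTE il).
Qed.

Lemma cnt_word a : cnt (word a) = a.
Proof. by apply/ffunP => l; rewrite ffunE count_word. Qed.

Lemma W w : G (fun c => le c (cnt w)) (wp w).
Proof.
suff H : forall d w, cnt w = d -> G (fun c => le c d) (wp w) by exact: H.
move: w => _ d; elim/(well_founded_ind (adm_wf Hadm)): d => d IHd.
suff H : forall m w, inv w = m -> cnt w = d -> G (fun c => le c d) (wp w).
  move=> w; exact: H.
elim=> [|m IHm] w iw cw.
  rewrite inv0_wp // cw; apply: Gmon; exact: (le_refl Hadm _).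
have : (0 < inv w)%N by rewrite iw.
move/inv_pos_split => [u [v [i [j [ij E]]]]].
pose w' := u ++ i :: j :: v.
have iw' : inv w' = m by move: iw; rewrite E inv_swap // => -[].
have cw' : cnt w' = d.
  by rewrite -cw E; apply/ffunP => l; rewrite !ffunE !count_cat /=; lia.
have Hrel : x j * x i = q j i *: (x i * x j) +
    \sum_(a <- finsupp (p j i)) p j i a *: mono x a.
  by case: HPBW => _ [_ _ H _ _]; apply: H.
have Hsupp : forall a, a \in finsupp (p j i) -> strict le a (eadd (eps i) (eps j)).
  by case: HPBW => _ [_ H _ _ _]; apply: H.
have -> : wp w = wp u * (x j * x i) * wp v by rewrite E /wp big_cat !big_cons /= !mulrA.
rewrite Hrel mulrDr mulrDl; apply: GD.
  have -> : wp u * (q j i *: (x i * x j)) * wp v = q j i *: wp w'.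
    by rewrite /w' /wp big_cat /= !big_cons -scalerAr -scalerAl !mulrA.
  exact: (GZ _ (q j i) _ (IHm w' iw' cw')).
rewrite big_seq mulr_sumr mulr_suml; apply: Gsum => a ap.
rewrite -scalerAr -scalerAl; apply: GZ.
have -> : wp u * mono x a * wp v = wp (u ++ word a ++ v).
  by rewrite -wp_word /wp !big_cat /= mulrA.
pose rest : expo n := eadd (cnt u) (cnt v).
have c1 : cnt (u ++ word a ++ v) = eadd a rest.
  by apply/ffunP => l; rewrite !ffunE !count_cat count_word addnCA.
have c2 : d = eadd (eadd (eps i) (eps j)) rest.
  rewrite -cw E; apply/ffunP => l; rewrite !ffunE !count_cat /=.
  move: (i == l) (j == l) (count_mem l u) (count_mem l v) => b1 b2 n1 n2; lia.
have Hs : strict le (cnt (u ++ word a ++ v)) d.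
  rewrite c1 c2; move: (Hsupp a ap) => /andP[ne lea]; apply/andP; split.
    apply: contra ne => /eqP H; apply/eqP/ffunP => l.
    by have := congr1 (fun f : expo n => f l) H; rewrite !ffunE => /addIn.
  exact: (le_add Hadm rest lea).
apply: Gmono (IHd _ Hs _ erefl) => c cle; exact: (le_trans Hadm cle (strict_le Hs)).
Qed.

Lemma Gprod a b : G (fun c => le c (eadd a b)) (mono x a * mono x b).
Proof.
have := W (word a ++ word b); rewrite /wp big_cat -!/(wp _) !wp_word.
suff -> : cnt (word a ++ word b) = eadd a b by [].
by apply/ffunP => l; rewrite !ffunE count_cat !count_word.
Qed.

Lemma Hind (c : {fsfun expo n -> k with 0}) :
  \sum_(a <- finsupp c) c a *: mono x a = 0 -> forall a, c a = 0.
Proof. by case: HPBW => _ [_ _ _ _ H]; apply: H. Qed.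

Lemma coefE r (c : {fsfun expo n -> k with 0}) s : rcoord x r c -> r = lcomb s ->
  forall a, c a = \sum_(z <- s | z.2 == a) z.1.
Proof.
move=> rc rs.
pose S : {fset expo n} := (finsupp c `|` [fset z.2 | z in s])%fset.
pose cs a := \sum_(z <- s | z.2 == a) z.1.
pose d : {fsfun expo n -> k with 0} := [fsfun a in S => c a - cs a].
have dE a : d a = if a \in S then c a - cs a else 0 by rewrite /d fsfunE.
have Hsub : (finsupp d `<=` S)%fset.
  apply/fsubsetP => a; rewrite mem_finsupp dE; case: ifP => //; by rewrite eqxx.
have H1 : \sum_(a <- finsupp d) d a *: mono x a = \sum_(a <- S) (c a - cs a) *: mono x a.
  rewrite (big_fset_incl _ Hsub) => [|a aS]; last first.
    by rewrite mem_finsupp negbK => /eqP ->; rewrite scale0r.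
  by apply: eq_big_seq => a aS; rewrite dE aS.
have H2 : \sum_(a <- S) c a *: mono x a = r.
  rewrite rc (big_fset_incl _ (fsubsetUl (finsupp c) [fset z.2 | z in s]%fset)) // => a _ ac.
  by rewrite fsfun_dflt // scale0r.
have H3 : \sum_(a <- S) cs a *: mono x a = lcomb s.
  rewrite /cs /lcomb.
  under eq_bigr => a _ do rewrite scaler_suml big_mkcond.
  rewrite exchange_big /=; apply: eq_big_seq => z zs.
  rewrite -big_mkcond /= -big_filter.
  have -> : [seq a <- S | z.2 == a] = [:: z.2].
    rewrite -(@filter_pred1_uniq _ S z.2) ?fset_uniq //; last first.
      by rewrite in_fsetU; apply/orP; right; apply: in_imfset.
    by apply: eq_filter => a /=; rewrite eq_sym.
  by rewrite big_seq1.
have Hd : \sum_(a <- finsupp d) d a *: mono x a = 0.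
  rewrite H1.
  have -> : \sum_(a <- S) (c a - cs a) *: mono x a =
     \sum_(a <- S) c a *: mono x a - \sum_(a <- S) cs a *: mono x a.
    by rewrite -sumrN -big_split /=; apply: eq_bigr => a _; rewrite scalerBl.
  by rewrite H2 H3 rs subrr.
move=> a; have := Hind d Hd a; rewrite dE; case: ifP => aS.
  by move/eqP; rewrite subr_eq0 => /eqP.
move=> _; rewrite fsfun_dflt; last first.
  by apply: contraFN aS; rewrite in_fsetU => ->.
symmetry; apply: big1_seq => z /andP[/eqP za zs].
exfalso; move: aS; rewrite in_fsetU -za.
have -> : z.2 \in [fset z0.2 | z0 in s]%fset by apply: in_imfset.
by rewrite orbT.
Qed.

Definition T (t : expo n * expo n) : R := mono x t.1 * mono x (eop t.2).

Lemma eop0 : eop (ezero n) = ezero n. Proof. by apply/ffunP => l; rewrite !ffunE. Qed.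
Lemma eadd0r a : eadd a (ezero n) = a. Proof. by apply/ffunP => l; rewrite !ffunE addn0. Qed.
Lemma eadd0l a : eadd (ezero n) a = a. Proof. by apply/ffunP => l; rewrite !ffunE. Qed.
Lemma mono0 : mono x (ezero n) = 1.
Proof. by rewrite /mono; apply: big1 => i _; rewrite ffunE expr0. Qed.

Lemma modord_irr m top (E : expo n) (i : 'I_m) : ~~ modord top (strict le) (E, i) (E, i).
Proof.
case: top; rewrite /modord /TOP /POT /= ltnn ?(negbTE (strict_irr E)) ?andbF //.
Qed.

Lemma final_gen (m : nat) (top : bool) (h : envvec k n m) (E : expo n) (i : 'I_m)
  (e : expo n * expo n * 'I_m) :
  e.2 = i -> h e != 0 -> T e.1 = mono x E ->
  (forall t, h t != 0 -> t != e ->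
     G (fun c => modord top (strict le) (c, t.2) (E, i)) (T t.1)) ->
  ms x h <> (fun=> 0) /\ Rexp x (modord top (strict le)) (ms x h) (E, i).
Proof.
move=> e2 he Te Ht.
have Hdec j : exists s, ms x h j = lcomb ((if j == i then [:: (h e, E)] else [::]) ++ s) /\
    forall z, z \in s -> modord top (strict le) (z.2, j) (E, i).
  rewrite /ms (bigID (fun t => t == e)) /=.
  have [s [Hs Ps]] : G (fun c => modord top (strict le) (c, j) (E, i))
     (\sum_(t <- finsupp h | (t.2 == j) && (t != e)) h t *: (mono x t.1.1 * mono x (eop t.1.2))).
    rewrite big_seq_cond; apply: Gsum => t /andP[ts /andP[/eqP tj te]].
    apply: GZ; rewrite -tj; apply: Ht => //; by rewrite -mem_finsupp.
  exists s; split => //; rewrite Hs /lcomb big_cat /=; congr (_ + _).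
  case: eqP => [ji|ji].
    rewrite big_seq1 /= -Te /T -big_filter.
    have -> : [seq t <- finsupp h | (t.2 == j) && (t == e)] = [:: e].
      rewrite -(@filter_pred1_uniq _ (finsupp h) e) ?fset_uniq ?mem_finsupp //.
      apply: eq_filter => t /=; case: (t =P e) => [->|_]; last by rewrite andbF.
      by rewrite andbT e2 ji eqxx.
    by rewrite big_seq1.
  rewrite big_nil big_pred0 // => t; apply/andP => -[/eqP tj /eqP te]; apply: ji.
  by rewrite -tj te e2.
have Hb : forall r : R, exists c, rcoord x r c by case: HPBW => _ [_ _ _ H _].
pose c j := proj1_sig (constructive_indefinite_description _ (Hb (ms x h j))).
have Hc j : rcoord x (ms x h j) (c j).
  by rewrite /c; case: constructive_indefinite_description.
have Hcoef j a : exists s, c j a = (if (j == i) && (E == a) then h e else 0) +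
     \sum_(z <- s | z.2 == a) z.1 /\
     forall z, z \in s -> modord top (strict le) (z.2, j) (E, i).
  have [s [Hs Ps]] := Hdec j; exists s; split => //.
  rewrite (coefE _ _ _ (Hc j) Hs) big_cat /=; congr (_ + _).
  case: (j == i) => /=; first by rewrite big_cons big_nil /=; case: (E == a); rewrite ?addr0.
  by rewrite big_nil.
have ciE : c i E != 0.
  have [s [-> Ps]] := Hcoef i E; rewrite !eqxx /= big1_seq ?addr0 // => z /andP[/eqP z2 zs].
  exfalso; move: (Ps z zs); rewrite z2; apply/negP; exact: modord_irr.
split.
  move=> H0; move: (Hc i); rewrite /rcoord H0 => H.
  by move: ciE; rewrite (Hind (c i) (esym H) E) eqxx.
exists c; split => //.
move=> [a j] /=; have [s [-> Ps]] := Hcoef j a => Hne.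
case: (boolP (has (fun z => z.2 == a) s)) => [/hasP[z zs /eqP za]|nh].
  right; rewrite -za; exact: Ps z zs.
rewrite big1_seq ?addr0 in Hne; last first.
  move=> z /andP[za zs]; exfalso; move/hasPn: nh => nh; by move: (nh z zs); rewrite za.
left; move: Hne; case: andP => [[/eqP -> /eqP ->]|] //; by rewrite eqxx.
Qed.

Lemma caseGen (m : nat) top (envlt : rel (expo n * expo n)) (E : expo n)
  (e1 : expo n * expo n) (i j : 'I_m) (t1 : expo n * expo n) :
  (forall t, envlt t e1 -> G (fun c => strict le c E) (T t)) -> T e1 = mono x E ->
  modord top envlt (t1, j) (e1, i) ->
  G (fun c => modord top (strict le) (c, j) (E, i)) (T t1).
Proof.
move=> core Te; case: top; rewrite /modord /TOP /POT /=.
  case/orP => [H|/andP[/eqP -> ij]].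
    by apply: Gmono (core _ H) => c cE; rewrite cE.
  rewrite Te; apply: Gmon; by rewrite (negbTE (strict_irr E)) eqxx ij.
case/orP => [ij|/andP[/eqP ji H]].
  by apply: Gmono (Gprod t1.1 (eop t1.2)) => c _; rewrite ij.
by apply: Gmono (core _ H) => c cE; rewrite ji eqxx cE orbT.
Qed.

Lemma main_sec (top : bool) :
  (forall (envlt : rel (expo n * expo n)),
     (envlt = env_star (strict le) \/ envlt = env_c (strict le)) ->
     forall (m : nat) (h : envvec k n m) (alpha : expo n) (i : 'I_m),
       Eexp (modord top envlt) h ((alpha, ezero n), i) ->
       ms x h <> (fun=> 0) /\ Rexp x (modord top (strict le)) (ms x h) (alpha, i))
  /\
  (forall (envlt : rel (expo n * expo n)),
     (envlt = env_lstar (strict le) \/ envlt = env_lc (strict le)) ->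
     forall (m : nat) (h : envvec k n m) (alpha : expo n) (i : 'I_m),
       Eexp (modord top envlt) h ((ezero n, alpha), i) ->
       ms x h <> (fun=> 0) /\ Rexp x (modord top (strict le)) (ms x h) (eop alpha, i)).
Proof.
split.
  move=> envlt Henv m h alpha i [he Hmax].
  have Te : T (alpha, ezero n) = mono x alpha by rewrite /T /= eop0 mono0 mulr1.
  have core : forall t, envlt t (alpha, ezero n) -> G (fun c => strict le c alpha) (T t).
    case: Henv => ->; move=> [a b]; rewrite /env_star /env_c /ltop /= eop0.
      rewrite (negbTE (strict0 Hadm _)) /= => /andP[/eqP -> H].
      by rewrite /T /= eop0 mono0 mulr1; apply: Gmon.
    rewrite eadd0r (negbTE (strict0 Hadm _)) andbF orbF => H.
    by apply: Gmono (Gprod a (eop b)) => c cle; exact: (strict_trans_le Hadm cle H).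
  apply: (@final_gen m top h alpha i ((alpha, ezero n), i)) => // -[t1 j] ht te.
  have [tE|lt] := Hmax _ ht; first by rewrite tE eqxx in te.
  exact: (caseGen _ _ _ _ _ _ _ _ core Te lt).
move=> envlt Henv m h alpha i [he Hmax].
have Te : T (ezero n, alpha) = mono x (eop alpha) by rewrite /T /= mono0 mul1r.
have core : forall t, envlt t (ezero n, alpha) -> G (fun c => strict le c (eop alpha)) (T t).
  case: Henv => ->; move=> [a b]; rewrite /env_lstar /env_lc /ltop /=.
    rewrite (negbTE (strict0 Hadm _)) /= => /andP[/eqP -> H].
    by rewrite /T /= mono0 mul1r; apply: Gmon.
  rewrite eadd0l (negbTE (strict0 Hadm _)) andbF orbF => H.
  by apply: Gmono (Gprod a (eop b)) => c cle; exact: (strict_trans_le Hadm cle H).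
apply: (@final_gen m top h (eop alpha) i ((ezero n, alpha), i)) => // -[t1 j] ht te.
have [tE|lt] := Hmax _ ht; first by rewrite tE eqxx in te.
exact: (caseGen _ _ _ _ _ _ _ _ core Te lt).
Qed.

End Alg.

Theorem mainTheorem5 (k : fieldType) (R : algType k) (n s : nat)
    (x : 'I_n -> R) (le : rel (expo n)) (q : 'I_n -> 'I_n -> k)
    (p : 'I_n -> 'I_n -> {fsfun expo n -> k with 0})
    (HPBW : PBW x le q p) (top : bool) :
  (forall (envlt : rel (expo n * expo n)),
     (envlt = env_star (strict le) \/ envlt = env_c (strict le)) ->
     forall (h : envvec k n s) (alpha : expo n) (i : 'I_s),
       Eexp (modord top envlt) h ((alpha, ezero n), i) ->
       ms x h <> (fun=> 0) /\ Rexp x (modord top (strict le)) (ms x h) (alpha, i))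
  /\
  (forall (envlt : rel (expo n * expo n)),
     (envlt = env_lstar (strict le) \/ envlt = env_lc (strict le)) ->
     forall (h : envvec k n s) (alpha : expo n) (i : 'I_s),
       Eexp (modord top envlt) h ((ezero n, alpha), i) ->
       ms x h <> (fun=> 0) /\ Rexp x (modord top (strict le)) (ms x h) (eop alpha, i)).
Proof.
have [H1 H2] := @main_sec k R n x le q p HPBW top.
split => envlt Henv h alpha i He; [exact: (H1 envlt Henv s h alpha i He) | exact: (H2 envlt Henv s h alpha i He)].
Qed.
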